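(* For a dcpo $P$ the following are equivalent: (1) $\Sigma P$ is a $d^{\ast}$-space; (2) for every $x\in P$ and every Scott closed set $C\neq P$, the set ${\downarrow}({\uparrow}x\cap C)$ is Scott closed; (3) for every $K\in K(\Sigma P)$ and every Scott closed set $C\neq P$, the set ${\downarrow}(K\cap C)$ is Scott closed; (4) $\Sigma P$ is $S^{\ast}$-well-filtered.
   Context: A dcpo is a poset in which every directed subset has a supremum. $\Sigma P$ is $P$ with the Scott topology (a set $U$ is Scott open if $U={\uparrow}U$ and every directed $D$ with $\bigvee D\in U$ meets $U$; Scott closed sets are the complements); its specialization order is the order of $P$. For a space $X$, ${\uparrow},{\downarrow}$ are taken in the specialization order ($x\le y$ iff $x\in cl\{y\}$); $K(X)$ is the set of nonempty compact saturated (= upper) subsets; a family in $K(X)$ is filtered if any two members contain a common member. $X$ is a $d^{\ast}$-space if for every directed $D\subseteq X$, every $x\in X$ and every nonempty open $U$, $\bigcap_{d\in D}{\uparrow}d\cap{\uparrow}x\subseteq U$ implies ${\uparrow}d\cap{\uparrow}x\subseteq U$ for some $d\in D$. $X$ is $S^{\ast}$-well-filtered if for every filtered family $\{K_i\mid i\in I\}\subseteq K(X)$, every $G\in K(X)$ and every nonempty open $U$, $\bigcap_{i}K_i\cap G\subseteq U$ implies $K_i\cap G\subseteq U$ for some $i$. *)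

(* Defs.v *)
From Stdlib Require Import List.

Set Implicit Arguments.
Section Order.
Variable T : Type.
Variable le : T -> T -> Prop.

Definition is_partial_order : Prop :=
  (forall x, le x x) /\
  (forall x y z, le x y -> le y z -> le x z) /\
  (forall x y, le x y -> le y x -> x = y).

Definition directed (D : T -> Prop) : Prop :=
  (exists d, D d) /\
  (forall a b, D a -> D b -> exists c, D c /\ le a c /\ le b c).

Definition is_sup (D : T -> Prop) (s : T) : Prop :=
  (forall d, D d -> le d s) /\
  (forall u, (forall d, D d -> le d u) -> le s u).

Definition is_dcpo : Prop :=
  is_partial_order /\ forall D, directed D -> exists s, is_sup D s.

Definition up (x : T) : T -> Prop := fun y => le x y.
Definition upset (A : T -> Prop) : Prop := forall x y, A x -> le x y -> A y.
Definition down (A : T -> Prop) : T -> Prop := fun y => exists a, A a /\ le y a.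

Definition scott_open (U : T -> Prop) : Prop :=
  upset U /\
  forall D s, directed D -> is_sup D s -> U s -> exists d, D d /\ U d.

Definition scott_closed (C : T -> Prop) : Prop :=
  scott_open (fun x => ~ C x).

Definition scott_compact (K : T -> Prop) : Prop :=
  forall (I : Type) (U : I -> T -> Prop),
    (forall i, scott_open (U i)) ->
    (forall x, K x -> exists i, U i x) ->
    exists l : list I, forall x, K x -> exists i, In i l /\ U i x.

(* K(Sigma P): nonempty compact saturated (= upper) subsets *)
Definition KSigma (K : T -> Prop) : Prop :=
  (exists x, K x) /\ scott_compact K /\ upset K.

(* Sigma P is a d*-space (specialization order of Sigma P = le) *)
Definition dstar_space : Prop :=
  forall (D : T -> Prop) (x : T) (U : T -> Prop),
    directed D -> scott_open U -> (exists u, U u) ->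
    (forall y, (forall d, D d -> up d y) -> up x y -> U y) ->
    exists d, D d /\ (forall y, up d y -> up x y -> U y).

Definition filtered_K (F : (T -> Prop) -> Prop) : Prop :=
  (forall K, F K -> KSigma K) /\
  (exists K, F K) /\
  (forall K1 K2, F K1 -> F K2 ->
     exists K3, F K3 /\ (forall y, K3 y -> K1 y) /\ (forall y, K3 y -> K2 y)).

Definition Sstar_well_filtered : Prop :=
  forall (F : (T -> Prop) -> Prop) (G U : T -> Prop),
    filtered_K F -> KSigma G -> scott_open U -> (exists u, U u) ->
    (forall y, (forall K, F K -> K y) -> G y -> U y) ->
    exists K, F K /\ (forall y, K y -> G y -> U y).

End Order.

(* Main.v *)
From mathcomp Require Import all_boot boolp classical_sets.
From Stdlib Require Import Classical.
Local Open Scope classical_set_scope.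

Lemma zorn_union (T:Type) (Pp : (T->Prop) -> Prop) :
  (forall Fm : (T->Prop)->Prop, (forall X, Fm X -> Pp X) ->
     (forall X Y, Fm X -> Fm Y -> (forall x, X x -> Y x) \/ (forall x, Y x -> X x)) ->
     Pp (fun x => exists X, Fm X /\ X x)) ->
  exists A, Pp A /\ forall B, (forall x, A x -> B x) -> Pp B -> forall x, B x -> A x.
Proof.
intros H.
destruct (@Zorn_bigcup T Pp) as [A [PA HA]].
- intros Fm HF Ht.
  have E : (\bigcup_(X in Fm) X) = (fun x => exists X, Fm X /\ X x).
    apply: funext => x; apply: propext; split.
    + by case=> X FX Xx; exists X.
    + by case=> X [FX Xx]; exists X.
  rewrite E; apply: H.
  + by move=> X FX; apply: HF.
  + intros X Y FX FY; case: (Ht X Y FX FY) => h; [left|right]; exact: h.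
- exists A; split => // B AB PB x Bx.
  apply: NNPP => nA.
  apply: (HA B) => //; split => //.
  by move=> h; apply: nA; apply: h.
Qed.

Require Import Defs.
From Stdlib Require Import List.
Set Implicit Arguments.
Unset Strict Implicit.

Lemma open_ext T (le : T -> T -> Prop) (U V : T -> Prop) :
  scott_open le U -> (forall x, U x <-> V x) -> scott_open le V.
Proof.
intros [Hu Hd] E; split.
- intros x y Vx xy. apply E. apply (Hu x y); [apply E; exact Vx | exact xy].
- intros D s HD Hs Vs. destruct (Hd D s HD Hs) as [d [Dd Ud]]; [apply E; exact Vs|].
  exists d; split; [exact Dd| apply E; exact Ud].
Qed.

Lemma closed_lower T (le : T -> T -> Prop) C a b :
  scott_closed le C -> C b -> le a b -> C a.
Proof.
intros [Hu _] Cb ab. apply NNPP; intros nCa. exact (Hu a b nCa ab Cb).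
Qed.

Lemma closed_sup T (le : T -> T -> Prop) C D s :
  scott_closed le C -> directed le D -> is_sup le D s -> (forall d, D d -> C d) -> C s.
Proof.
intros [_ Hd] HD Hs HC. apply NNPP; intros nCs.
destruct (Hd D s HD Hs nCs) as [d [Dd nd]]. exact (nd (HC d Dd)).
Qed.

Lemma mk_closed T (le : T -> T -> Prop) (A : T -> Prop) :
  (forall a b, A b -> le a b -> A a) ->
  (forall D s, directed le D -> is_sup le D s -> (forall d, D d -> A d) -> A s) ->
  scott_closed le A.
Proof.
intros Hl Hs; split.
- intros x y nAx xy Ay. exact (nAx (Hl x y Ay xy)).
- intros D s HD Hsup nAs. apply NNPP; intros H. apply nAs. apply (Hs D s HD Hsup).
  intros d Dd. apply NNPP; intros nAd. apply H. exists d; split; assumption.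
Qed.

Lemma open_compl_closed T (le : T -> T -> Prop) U :
  scott_open le U -> scott_closed le (fun x => ~ U x).
Proof.
intros HU. unfold scott_closed. apply (open_ext HU). intros x; split.
- intros u nu; exact (nu u).
- apply NNPP.
Qed.

Lemma up_KSigma T (le : T -> T -> Prop) (HP : is_dcpo le) x : KSigma le (up le x).
Proof.
destruct HP as [[Hr [Ht _]] _]. split; [|split].
- exists x. apply Hr.
- intros I U HU Hc. destruct (Hc x (Hr x)) as [i Ui].
  exists (i :: nil). intros y xy. exists i. split; [left; reflexivity|].
  destruct (HU i) as [Hu _]. exact (Hu x y Ui xy).
- intros a b xa ab. exact (Ht _ _ _ xa ab).
Qed.

Lemma down_lower T (le : T -> T -> Prop) (HP : is_dcpo le) (A : T -> Prop) a b :
  down le A b -> le a b -> down le A a.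
Proof.
destruct HP as [[Hr [Ht _]] _]. intros [y [Ay by_]] ab. exists y. split; [exact Ay| exact (Ht _ _ _ ab by_)].
Qed.

Lemma d12 T (le : T -> T -> Prop) (HP : is_dcpo le) :
  dstar_space le ->
  (forall (x : T) (C : T -> Prop),
        scott_closed le C -> ~ (forall y, C y) ->
        scott_closed le (down le (fun y => up le x y /\ C y))).
Proof.
intros Hd x C HC nC. apply mk_closed.
- intros a b Hb ab. exact (down_lower HP Hb ab).
- intros D s HD Hs HA. apply NNPP; intros nAs.
  destruct (Hd D x (fun y => ~ C y) HD HC) as [d [Dd Hd']].
  + apply NNPP; intros H. apply nC. intros y. apply NNPP; intros nCy. apply H. exists y; exact nCy.
  + intros y Hy xy Cy. apply nAs. exists y. split; [split; assumption|].
    apply (proj2 Hs). exact Hy.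
  + destruct (HA d Dd) as [y [[xy Cy] dy]]. exact (Hd' y dy xy Cy).
Qed.

Lemma d21 T (le : T -> T -> Prop) (HP : is_dcpo le) :
  (forall (x : T) (C : T -> Prop),
        scott_closed le C -> ~ (forall y, C y) ->
        scott_closed le (down le (fun y => up le x y /\ C y))) ->
  dstar_space le.
Proof.
intros H2 D x U HD HU [u Uu] Hyp.
destruct HP as [[Hr [Ht Ha]] Hsup].
apply NNPP; intros Hn.
destruct (Hsup D HD) as [s Hs].
assert (HC := open_compl_closed HU).
assert (nC : ~ (forall y, ~ U y)) by (intros h; exact (h u Uu)).
assert (Hcl := H2 x _ HC nC).
assert (As : down le (fun y => up le x y /\ ~ U y) s).
{ apply (closed_sup Hcl HD Hs). intros d Dd.
  apply NNPP; intros nA. apply Hn. exists d. split; [exact Dd|].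
  intros y dy xy. apply NNPP; intros nUy. apply nA. exists y. split; [split; assumption| exact dy]. }
destruct As as [y [[xy nUy] sy]]. apply nUy. apply Hyp; [|exact xy].
intros d Dd. exact (Ht _ _ _ (proj1 Hs d Dd) sy).
Qed.

Lemma d32 T (le : T -> T -> Prop) (HP : is_dcpo le) :
  (forall (K C : T -> Prop),
        KSigma le K -> scott_closed le C -> ~ (forall y, C y) ->
        scott_closed le (down le (fun y => K y /\ C y))) ->
  (forall (x : T) (C : T -> Prop),
        scott_closed le C -> ~ (forall y, C y) ->
        scott_closed le (down le (fun y => up le x y /\ C y))).
Proof.
intros H3 x C HC nC. apply H3; [apply up_KSigma; exact HP| exact HC| exact nC].
Qed.

Lemma list_ub T (le : T -> T -> Prop) (HP : is_dcpo le) (D : T -> Prop) (l : list {d : T | D d}) :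
  directed le D -> exists c, D c /\ forall i, In i l -> le (proj1_sig i) c.
Proof.
destruct HP as [[Hr [Ht _]] _]. intros [[d0 D0] Hdir].
induction l as [|i l IH].
- exists d0. split; [exact D0| intros i []].
- destruct IH as [c [Dc Hc]]. destruct i as [a Da].
  destruct (Hdir a c Da Dc) as [e [De [ae ce]]].
  exists e. split; [exact De|]. intros j [<-|Hj]; [exact ae|].
  exact (Ht _ _ _ (Hc j Hj) ce).
Qed.

Lemma d23 T (le : T -> T -> Prop) (HP : is_dcpo le) :
  (forall (x : T) (C : T -> Prop),
        scott_closed le C -> ~ (forall y, C y) ->
        scott_closed le (down le (fun y => up le x y /\ C y))) ->
  (forall (K C : T -> Prop),
        KSigma le K -> scott_closed le C -> ~ (forall y, C y) ->
        scott_closed le (down le (fun y => K y /\ C y))).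
Proof.
intros H2 K C HK HC nC.
assert (Hd := d21 HP H2).
assert (HP' := HP). destruct HP' as [[Hr [Ht Ha]] Hsup].
apply mk_closed.
- intros a b Hb ab. exact (down_lower HP Hb ab).
- intros D s HD Hs HA. apply NNPP; intros nAs.
  destruct HK as [_ [Hcomp HKu]].
  set (W := fun (i : {d : T | D d}) k => down le (fun y => up le (proj1_sig i) y /\ C y) k -> False).
  assert (HW : forall i, scott_open le (W i)).
  { intros i. exact (H2 (proj1_sig i) C HC nC). }
  destruct (Hcomp _ W HW) as [l Hl].
  { intros k Kk.
    assert (nU : exists u, ~ C u).
    { apply NNPP; intros h. apply nC. intros y. apply NNPP; intros nCy. apply h. exists y; exact nCy. }
    destruct (Hd D k (fun y => ~ C y) HD HC nU) as [d [Dd Hdk]].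
    - intros y Hy ky Cy. apply nAs. exists y. split; [split; [exact (HKu k y Kk ky)| exact Cy]|].
      apply (proj2 Hs). exact Hy.
    - exists (exist _ d Dd). unfold W; simpl. intros [y [[dy Cy] ky]]. exact (Hdk y dy ky Cy). }
  destruct (list_ub HP l HD) as [c [Dc Hc]].
  destruct (HA c Dc) as [y [[Ky Cy] cy]].
  destruct (Hl y Ky) as [i [Hi Wi]]. apply Wi.
  exists y. split; [split; [exact (Ht _ _ _ (Hc i Hi) cy)| exact Cy]| apply Hr].
Qed.

Lemma wf_lemma T (le : T -> T -> Prop) (HP : is_dcpo le) :
  (forall (K C : T -> Prop),
        KSigma le K -> scott_closed le C -> ~ (forall y, C y) ->
        scott_closed le (down le (fun y => K y /\ C y))) ->
  forall F C, filtered_K le F -> scott_closed le C -> ~ (forall y, C y) ->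
  (forall K, F K -> exists k, K k /\ C k) ->
  exists s, (forall K, F K -> K s) /\ C s.
Proof.
intros H3 F C [HFK [[K0 FK0] Hfil]] HC nC Hmeet.
assert (H2 := d32 HP H3).
assert (HP' := HP). destruct HP' as [[Hr [Ht Ha]] Hsup].
set (U0 := fun x => ~ C x).
set (Pp := fun W : T -> Prop => scott_open le (fun x => W x \/ U0 x) /\
   forall K, F K -> exists k, K k /\ ~ W k /\ ~ U0 k).
destruct (@zorn_union T Pp) as [Wm [[HWo HWm] Hmax]].
- intros Fm HFm Htot. split.
  + split.
    * intros x y [[X [FX Xx]]|Ux] xy.
      -- destruct (proj1 (HFm X FX)) as [Hu _].
         destruct (Hu x y (or_introl Xx) xy) as [Xy|Uy]; [left; exists X; split; assumption| right; exact Uy].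
      -- right. exact (proj1 HC x y Ux xy).
    * intros D s HD Hs [[X [FX Xs]]|Us].
      -- destruct (proj1 (HFm X FX)) as [_ Hd].
         destruct (Hd D s HD Hs (or_introl Xs)) as [d [Dd [Xd|Ud]]].
         ++ exists d; split; [exact Dd| left; exists X; split; assumption].
         ++ exists d; split; [exact Dd| right; exact Ud].
      -- destruct (proj2 HC D s HD Hs Us) as [d [Dd Ud]].
         exists d; split; [exact Dd| right; exact Ud].
  + intros K FK. apply NNPP; intros Hn.
    assert (Hcov : forall k, K k -> (exists X, Fm X /\ X k) \/ U0 k).
    { intros k Kk. apply NNPP; intros h. apply Hn. exists k. split; [exact Kk|].
      split; intros h'; apply h; [left; exact h'| right; exact h']. }
    set (V := fun (i : option (T -> Prop)) x =>
       match i with None => U0 x | Some X => Fm X /\ (X x \/ U0 x) end).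
    assert (HV : forall i, scott_open le (V i)).
    { intros [X|]; simpl.
      - destruct (classic (Fm X)) as [FX|nFX].
        + apply (open_ext (proj1 (HFm X FX))). intros x; split; [intros h; split; assumption| intros [_ h]; exact h].
        + split; [intros x y [h _]; contradiction| intros D s _ _ [h _]; contradiction].
      - exact HC. }
    destruct (HFK K FK) as [_ [Hcomp _]].
    destruct (Hcomp _ V HV) as [l Hl].
    { intros k Kk. destruct (Hcov k Kk) as [[X [FX Xk]]|Uk].
      - exists (Some X). simpl. split; [exact FX| left; exact Xk].
      - exists None. exact Uk. }
    assert (Hlist : forall l : list (option (T -> Prop)),
      (exists W0, Fm W0 /\ forall i, In i l -> forall x, V i x -> W0 x \/ U0 x) \/
      (forall i, In i l -> forall x, V i x -> U0 x)).
    { induction l0 as [|i l0 IH].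
      - right. intros i [].
      - destruct i as [X|].
        + destruct (classic (Fm X)) as [FX|nFX].
          * left. destruct IH as [[W0 [FW0 HW0]]|HU].
            -- destruct (Htot X W0 FX FW0) as [XW|WX].
               ++ exists W0. split; [exact FW0|]. intros i [<-|Hi] x Vx.
                  ** destruct Vx as [_ [Xx|Ux]]; [left; exact (XW x Xx)| right; exact Ux].
                  ** exact (HW0 i Hi x Vx).
               ++ exists X. split; [exact FX|]. intros i [<-|Hi] x Vx.
                  ** destruct Vx as [_ h]; exact h.
                  ** destruct (HW0 i Hi x Vx) as [h|h]; [left; exact (WX x h)| right; exact h].
            -- exists X. split; [exact FX|]. intros i [<-|Hi] x Vx.
               ** destruct Vx as [_ h]; exact h.
               ** right; exact (HU i Hi x Vx).
          * destruct IH as [[W0 [FW0 HW0]]|HU].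
            -- left. exists W0. split; [exact FW0|]. intros i [<-|Hi] x Vx.
               ** destruct Vx as [h _]; contradiction.
               ** exact (HW0 i Hi x Vx).
            -- right. intros i [<-|Hi] x Vx.
               ** destruct Vx as [h _]; contradiction.
               ** exact (HU i Hi x Vx).
        + destruct IH as [[W0 [FW0 HW0]]|HU].
          * left. exists W0. split; [exact FW0|]. intros i [<-|Hi] x Vx.
            ** right; exact Vx.
            ** exact (HW0 i Hi x Vx).
          * right. intros i [<-|Hi] x Vx; [exact Vx| exact (HU i Hi x Vx)]. }
    destruct (Hlist l) as [[W0 [FW0 HW0]]|HU].
    * destruct (proj2 (HFm W0 FW0) K FK) as [k [Kk [nW nU]]].
      destruct (Hl k Kk) as [i [Hi Vi]].
      destruct (HW0 i Hi k Vi) as [h|h]; contradiction.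
    * destruct (Hmeet K FK) as [k [Kk Ck]].
      destruct (Hl k Kk) as [i [Hi Vi]]. exact (HU i Hi k Vi Ck).
-
  set (A := fun x => ~ (Wm x \/ U0 x)).
  assert (HA : scott_closed le A).
  { unfold scott_closed. apply (open_ext HWo). intros x; split.
    - intros h nh; exact (nh h).
    - apply NNPP. }
  assert (AC : forall x, A x -> C x).
  { intros x Ax. apply NNPP; intros nCx. apply Ax. right; exact nCx. }
  assert (nA : ~ (forall y, A y)) by (intros h; apply nC; intros y; exact (AC y (h y))).
  assert (Hmin : forall A' : T -> Prop, scott_closed le A' -> (forall x, A' x -> A x) ->
     (forall K, F K -> exists k, K k /\ A' k) -> forall x, A x -> A' x).
  { intros A' HA' A'A Hm x Ax. apply NNPP; intros nA'x.
    refine (Ax (or_introl (Hmax (fun y => ~ A' y) _ _ x nA'x))).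
    - intros y Wy A'y. exact (A'A y A'y (or_introl Wy)).
    - split.
      + apply (open_ext HA'). intros y; split; [intros h; left; exact h|].
        intros [h|h]; [exact h| intros A'y; exact (A'A y A'y (or_intror h))].
      + intros K FK. destruct (Hm K FK) as [k [Kk A'k]]. exists k.
        split; [exact Kk|]. split; [intros h; exact (h A'k)|].
        intros h. exact (A'A k A'k (or_intror h)). }
  assert (Hlow : forall a b, A b -> le a b -> A a) by (intros a b Ab ab; exact (closed_lower HA Ab ab)).
  assert (HK : forall K, F K -> forall x, A x -> exists k, K k /\ A k /\ le x k).
  { intros K FK.
    assert (Hc := H3 K A (HFK K FK) HA nA).
    intros x Ax.
    assert (Hd : down le (fun y => K y /\ A y) x).
    { apply (Hmin _ Hc).
      - intros y [z [[Kz Az] yz]]. exact (Hlow y z Az yz).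
      - intros K' FK'. destruct (Hfil K K' FK FK') as [K3 [FK3 [HK3a HK3b]]].
        destruct (HWm K3 FK3) as [k [K3k [nW nU]]].
        assert (Ak : A k) by (intros [h|h]; contradiction).
        exists k. split; [exact (HK3b k K3k)|]. exists k. split; [split; [exact (HK3a k K3k)| exact Ak]| apply Hr].
      - exact Ax. }
    destruct Hd as [k [[Kk Ak] xk]]. exists k. split; [exact Kk| split; assumption]. }
  assert (Hdir : directed le A).
  { split.
    - destruct (HWm K0 FK0) as [k [_ [nW nU]]]. exists k. intros [h|h]; contradiction.
    - intros a x Aa Ax.
      assert (Hc := H2 x A HA nA).
      assert (Hd : down le (fun y => up le x y /\ A y) a).
      { apply (Hmin _ Hc).
        - intros y [z [[_ Az] yz]]. exact (Hlow y z Az yz).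
        - intros K FK. destruct (HK K FK x Ax) as [k [Kk [Ak xk]]].
          exists k. split; [exact Kk|]. exists k. split; [split; assumption| apply Hr].
        - exact Aa. }
      destruct Hd as [y [[xy Ay] ay]]. exists y. split; [exact Ay| split; assumption]. }
  destruct (Hsup A Hdir) as [s Hs].
  assert (As : A s) by (apply (closed_sup HA Hdir Hs); intros d Ad; exact Ad).
  exists s. split; [|exact (AC s As)].
  intros K FK. destruct (HK K FK s As) as [k [Kk [Ak sk]]].
  destruct (HFK K FK) as [_ [_ HKu]]. exact (HKu k s Kk (proj1 Hs k Ak)).
Qed.

Lemma d34 T (le : T -> T -> Prop) (HP : is_dcpo le) :
  (forall (K C : T -> Prop),
        KSigma le K -> scott_closed le C -> ~ (forall y, C y) ->
        scott_closed le (down le (fun y => K y /\ C y))) ->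
  Sstar_well_filtered le.
Proof.
intros H3 F G U HF HG HU [u Uu] Hyp.
apply NNPP; intros Hn.
set (C := fun x => ~ U x).
assert (HC := open_compl_closed HU).
assert (nC : ~ (forall y, C y)) by (intros h; exact (h u Uu)).
assert (Hcl := H3 G C HG HC nC).
assert (HP' := HP). destruct HP' as [[Hr [Ht Ha]] Hsup].
destruct (wf_lemma HP H3 HF Hcl) as [s [Hs [y [[Gy Cy] sy]]]].
- intros h. destruct (h u) as [y [[_ Cy] uy]]. exact (Cy (proj1 HU u y Uu uy)).
- intros K FK. apply NNPP; intros h. apply Hn. exists K. split; [exact FK|].
  intros y Ky Gy. apply NNPP; intros nUy. apply h. exists y. split; [exact Ky|].
  exists y. split; [split; assumption| apply Hr].
- apply Cy. apply Hyp; [|exact Gy].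
  intros K FK. destruct (proj1 HF K FK) as [_ [_ HKu]]. exact (HKu s y (Hs K FK) sy).
Qed.

Lemma d41 T (le : T -> T -> Prop) (HP : is_dcpo le) :
  Sstar_well_filtered le -> dstar_space le.
Proof.
intros H4 D x U HD HU HUn Hyp.
assert (HP' := HP). destruct HP' as [[Hr [Ht Ha]] Hsup].
set (F := fun K : T -> Prop => exists d, D d /\ forall y, K y <-> up le d y).
assert (HKF : forall K, F K -> KSigma le K).
{ intros K [d [Dd E]]. destruct (up_KSigma HP d) as [[z uz] [Hc Hu]]. split; [|split].
  - exists z. apply E. exact uz.
  - intros I V HV Hcov. destruct (Hc I V HV) as [l Hl].
    + intros y dy. apply Hcov. apply E. exact dy.
    + exists l. intros y Ky. apply Hl. apply E. exact Ky.
  - intros a b Ka ab. apply E. apply (Hu a b); [apply E; exact Ka| exact ab]. }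
destruct (H4 F (up le x) U) as [K [[d [Dd E]] HK]].
- split; [exact HKF|]. split.
  + destruct (proj1 HD) as [d Dd]. exists (up le d). exists d. split; [exact Dd| intros y; split; auto].
  + intros K1 K2 [d1 [D1 E1]] [d2 [D2 E2]].
    destruct (proj2 HD d1 d2 D1 D2) as [c [Dc [d1c d2c]]].
    exists (up le c). split; [exists c; split; [exact Dc| intros y; split; auto]|].
    split; intros y cy; [apply E1| apply E2]; [exact (Ht _ _ _ d1c cy)| exact (Ht _ _ _ d2c cy)].
- apply up_KSigma; exact HP.
- exact HU.
- exact HUn.
- intros y HyK xy. apply Hyp; [|exact xy]. intros d Dd. apply (HyK (up le d)).
  exists d. split; [exact Dd| intros z; split; auto].
- exists d. split; [exact Dd|]. intros y dy xy. apply HK; [apply E; exact dy| exact xy].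
Qed.

Theorem mainTheorem12 (T : Type) (le : T -> T -> Prop) (HP : is_dcpo le) :
  (dstar_space le <->
     (forall (x : T) (C : T -> Prop),
        scott_closed le C -> ~ (forall y, C y) ->
        scott_closed le (down le (fun y => up le x y /\ C y)))) /\
  ((forall (x : T) (C : T -> Prop),
        scott_closed le C -> ~ (forall y, C y) ->
        scott_closed le (down le (fun y => up le x y /\ C y))) <->
     (forall (K C : T -> Prop),
        KSigma le K -> scott_closed le C -> ~ (forall y, C y) ->
        scott_closed le (down le (fun y => K y /\ C y)))) /\
  ((forall (K C : T -> Prop),
        KSigma le K -> scott_closed le C -> ~ (forall y, C y) ->
        scott_closed le (down le (fun y => K y /\ C y))) <->
     Sstar_well_filtered le).
Proof.
split; [split; [apply d12; exact HP| apply d21; exact HP]|].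
split; [split; [apply d23; exact HP| apply d32; exact HP]|].
split; [apply d34; exact HP|].
intros H4. apply (d23 HP). apply (d12 HP). apply (d41 HP). exact H4.
Qed.
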